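(* Let $L$ be a finite dimensional simple Lie algebra over $\mathbb{C}$ with Cartan subalgebra $\eta$. Let $f:L\times L\to L$ be a biderivation of $L$ and let $\phi,\psi:L\to L$ be linear maps such that $f(x,y)=[\phi(x),y]=[x,\psi(y)]$ for all $x,y\in L$. Then $\phi(h)\in\eta$ and $\psi(h)\in\eta$ for every $h\in\eta$.
   Context: A biderivation of a Lie algebra $L$ is a bilinear map $f:L\times L\to L$ such that $f([x,y],z)=[x,f(y,z)]+[f(x,z),y]$ and $f(x,[y,z])=[f(x,y),z]+[y,f(x,z)]$ for all $x,y,z\in L$. *)

(* Defs.v *)
From mathcomp Require Import all_boot all_algebra.
From mathcomp Require Import Rstruct complex.
Set Implicit Arguments. Unset Strict Implicit. Unset Printing Implicit Defensive.
Import GRing.Theory.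
Local Open Scope ring_scope.

Definition Cfield : fieldType := (Rdefinitions.R)[i].

Section Lie.
Variables (F : fieldType) (V : vectType F) (br : V -> V -> V).

Definition is_linear_map (g : V -> V) : Prop :=
  forall (a : F) (x y : V), g (a *: x + y) = a *: g x + g y.

Definition is_bilinear (g : V -> V -> V) : Prop :=
  (forall (a : F) (x y z : V), g (a *: x + y) z = a *: g x z + g y z) /\
  (forall (a : F) (x y z : V), g x (a *: y + z) = a *: g x y + g x z).

Definition is_lie_bracket : Prop :=
  [/\ is_bilinear br,
      (forall x, br x x = 0) &
      (forall x y z, br x (br y z) + br y (br z x) + br z (br x y) = 0)].

Definition lie_subalgebra (H : {vspace V}) : Prop :=
  forall x y, x \in H -> y \in H -> br x y \in H.

Definition lie_ideal (I : {vspace V}) : Prop :=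
  forall x y, y \in I -> br x y \in I.

Definition simple_lie : Prop :=
  (exists x y, br x y != 0) /\
  (forall I : {vspace V}, lie_ideal I -> I = 0%VS \/ I = fullv).

(* Nilpotent subalgebra: some term C^n H of the lower central series vanishes,
   i.e. all iterated brackets [x1,[x2,...,[xn,y]...]] with xi, y in H are 0. *)
Definition lie_nilpotent (H : {vspace V}) : Prop :=
  exists n : nat, forall (s : seq V) (y : V),
    size s = n -> all (fun x => x \in H) s -> y \in H ->
    foldr br y s = 0.

Definition cartan_subalgebra (H : {vspace V}) : Prop :=
  [/\ lie_subalgebra H, lie_nilpotent H &
      (forall x, (forall h, h \in H -> br x h \in H) -> x \in H)].

Definition biderivation (f : V -> V -> V) : Prop :=
  [/\ is_bilinear f,
      (forall x y z, f (br x y) z = br x (f y z) + br (f x z) y) &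
      (forall x y z, f x (br y z) = br (f x y) z + br y (f x z))].

End Lie.

(* Main.v *)
Require Import Defs.
From mathcomp Require Import all_boot all_algebra.
From mathcomp Require Import Rstruct complex.
From Stdlib Require Import Classical.
From mathcomp Require Import zify.
Import GRing.Theory Num.Theory.
Local Open Scope ring_scope.

Section Lie.
Variables (V : vectType Cfield) (br : V -> V -> V).
Hypothesis Hlie : is_lie_bracket br.
Hypothesis Hsimple : simple_lie br.

Lemma brL a x y z : br (a *: x + y) z = a *: br x z + br y z.
Proof. by case: Hlie => [[H _] _ _]; apply: H. Qed.
Lemma brR a x y z : br x (a *: y + z) = a *: br x y + br x z.
Proof. by case: Hlie => [[_ H] _ _]; apply: H. Qed.
Lemma br_xx x : br x x = 0.
Proof. by case: Hlie => _ H _; apply: H. Qed.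
Lemma br_jac x y z : br x (br y z) + br y (br z x) + br z (br x y) = 0.
Proof. by case: Hlie => _ _ H; apply: H. Qed.

Lemma br0l z : br 0 z = 0.
Proof.
have := brL 1 0 0 z; rewrite !scale1r addr0 => e.
by apply: (addrI (br 0 z)); rewrite addr0 -e.
Qed.
Lemma br0r z : br z 0 = 0.
Proof.
have := brR 1 z 0 0; rewrite !scale1r addr0 => e.
by apply: (addrI (br z 0)); rewrite addr0 -e.
Qed.
Lemma brDl x y z : br (x + y) z = br x z + br y z.
Proof. by have := brL 1 x y z; rewrite !scale1r. Qed.
Lemma brDr x y z : br x (y + z) = br x y + br x z.
Proof. by have := brR 1 x y z; rewrite !scale1r. Qed.
Lemma brZl a x z : br (a *: x) z = a *: br x z.
Proof. by have := brL a x 0 z; rewrite !addr0 br0l addr0. Qed.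
Lemma brZr a x z : br x (a *: z) = a *: br x z.
Proof. by have := brR a x z 0; rewrite !addr0 br0r addr0. Qed.
Lemma brNl x z : br (- x) z = - br x z.
Proof. by rewrite -scaleN1r brZl scaleN1r. Qed.
Lemma brNr x z : br x (- z) = - br x z.
Proof. by rewrite -scaleN1r brZr scaleN1r. Qed.
Lemma brBl x y z : br (x - y) z = br x z - br y z.
Proof. by rewrite brDl brNl. Qed.
Lemma brBr x y z : br x (y - z) = br x y - br x z.
Proof. by rewrite brDr brNr. Qed.
Lemma br_anti x y : br x y = - br y x.
Proof.
have := br_xx (x + y); rewrite brDl !brDr !br_xx add0r addr0 => /eqP.
by rewrite addr_eq0 => /eqP.
Qed.
Lemma jac x y z : br x (br y z) = br (br x y) z + br y (br x z).
Proof.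
have := br_jac x y z => /eqP; rewrite -addrA addr_eq0 => /eqP ->.
by rewrite (br_anti z x) brNr (br_anti z (br x y)) opprD !opprK addrC.
Qed.
Lemma jac' x y z : br (br x y) z = br x (br y z) - br y (br x z).
Proof. by rewrite jac addrK. Qed.

Definition brE := (brDl, brDr, brZl, brZr, brNl, brNr, brBl, brBr, br0l, br0r).

Lemma vspace_of_pred (P : V -> Prop) :
  P 0 -> (forall a x y, P x -> P y -> P (a *: x + y)) ->
  exists U : {vspace V}, forall x, x \in U <-> P x.
Proof.
move=> P0 Pl.
have PZ : forall a x, P x -> P (a *: x) by move=> a x Px; have := Pl a x 0 Px P0; rewrite addr0.
have PD : forall x y, P x -> P y -> P (x + y) by move=> x y Px Py; have := Pl 1 x y Px Py; rewrite scale1r.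
suff: forall k (U : {vspace V}), (forall x, x \in U -> P x) ->
    (\dim (fullv : {vspace V}) - \dim U <= k)%N -> exists U : {vspace V}, forall x, x \in U <-> P x.
  by move/(_ _ 0%VS); apply=> //; move=> x; rewrite memv0 => /eqP ->.
elim=> [|k IH] U UP dU.
  exists U => x; split; first by apply: UP.
  move=> _; have: U == fullv by rewrite eqEdim subvf /= -subn_eq0; apply/eqP; lia.
  by move/eqP ->; rewrite memvf.
case: (classic (exists x, P x /\ x \notin U)) => [[x [Px xU]]|nex].
  apply: (IH (U + <[x]>)%VS).
    move=> y /memv_addP [u uU [w /vlineP [c ->] ->]].
    by apply: PD; [apply: UP | apply: PZ].
  have sU : (U <= U + <[x]>)%VS by apply: addvSl.
  have : (\dim U < \dim (U + <[x]>))%N.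
    rewrite ltnNge; apply/negP => dle.
    have : U == (U + <[x]>)%VS by rewrite eqEdim dle sU.
    move/eqP => eU; move/negP: xU; apply; rewrite eU.
    by have := memv_add (mem0v U) (memv_line x); rewrite add0r.
  have := dimvS (subvf (U + <[x]>)%VS); lia.
exists U => y; split; first by apply: UP.
move=> Py; apply/negPn/negP => yU; apply: nex; by exists y.
Qed.

Lemma ideal_cases (P : V -> Prop) :
  P 0 -> (forall a x y, P x -> P y -> P (a *: x + y)) ->
  (forall x y, P y -> P (br x y)) ->
  (forall x, P x -> x = 0) \/ (forall x, P x).
Proof.
move=> P0 Pl Pi; have [U HU] := @vspace_of_pred P P0 Pl.
have idU : lie_ideal br U by move=> x y /HU Py; apply/HU; apply: Pi.
case: Hsimple => _ /(_ U idU) [eU|eU]; [left|right].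
  by move=> x /HU; rewrite eU memv0 => /eqP.
by move=> x; apply/HU; rewrite eU memvf.
Qed.

Lemma nonab : exists x y, br x y != 0.
Proof. by case: Hsimple. Qed.

Lemma centerless z : (forall y, br z y = 0) -> z = 0.
Proof.
move=> Hz.
have P0 : forall y, br 0 y = 0 by move=> y; rewrite br0l.
have Pl : forall a x y, (forall w, br x w = 0) -> (forall w, br y w = 0) -> forall w, br (a *: x + y) w = 0.
  by move=> a x y Hx Hy w; rewrite brL Hx Hy scaler0 addr0.
have Pi : forall x y, (forall w, br y w = 0) -> forall w, br (br x y) w = 0.
  by move=> x y Hy w; have := jac x y w; rewrite Hy br0r Hy addr0 => <-.
case: (@ideal_cases (fun w => forall y, br w y = 0) P0 Pl Pi) => H.
- by apply: H.
- by case: nonab => x [y]; rewrite H eqxx.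
Qed.

Lemma perfect X : (forall u v, br X (br u v) = 0) -> X = 0.
Proof.
move=> HX.
have P0 : forall u v, br 0 (br u v) = 0 by move=> u v; rewrite br0l.
have Pl : forall a x y, (forall u v, br x (br u v) = 0) -> (forall u v, br y (br u v) = 0) ->
    forall u v, br (a *: x + y) (br u v) = 0.
  by move=> a x y Hx Hy u v; rewrite brL Hx Hy scaler0 addr0.
have Pi : forall x y, (forall u v, br y (br u v) = 0) -> forall u v, br (br x y) (br u v) = 0.
  move=> x y Hy u v; have := jac x y (br u v); rewrite Hy br0r (jac x u v) brDr !Hy.
  by rewrite addr0 => /esym; rewrite addr0.
case: (@ideal_cases (fun w => forall u v, br w (br u v) = 0) P0 Pl Pi) => H.
- by apply: H.
- case: nonab => x [y]; rewrite (@centerless (br x y)) ?eqxx //.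
  by move=> w; rewrite br_anti H oppr0.
Qed.


Lemma lin4 (a b c d : V) : a - b - c + d = 0 -> a + d = c + b.
Proof.
move=> e; apply/eqP; rewrite -subr_eq0 -e opprD.
rewrite -!addrA; apply/eqP; congr (_ + _).
by rewrite [RHS]addrCA [RHS]addrA [RHS]addrC.
Qed.

Lemma two_neq0 : (2 : Cfield) != 0.
Proof. by rewrite pnatr_eq0. Qed.

Lemma eq_opp0 (x : V) : x = - x -> x = 0.
Proof.
move=> e; have : 2 *: x = 0 by rewrite scaler_nat mulr2n {2}e subrr.
by move/eqP; rewrite scaler_eq0 (negPf two_neq0) /= => /eqP.
Qed.

Lemma sub4 (A1 A2 A3 A4 B1 B2 B3 B4 : V) :
  A1 + A2 + A3 + A4 = B1 + B2 + B3 + B4 ->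
  (A1 - B1) + (A2 - B2) + (A3 - B3) + (A4 - B4) = 0.
Proof.
move=> e; rewrite (addrACA A1) -opprD (addrACA (A1 + A2)) -opprD.
rewrite (addrACA (A1 + A2 + A3)) -opprD e; exact: subrr.
Qed.

Section Linear.
Variable T : V -> V.
Hypothesis HT : is_linear_map T.
Lemma LD x y : T (x + y) = T x + T y.
Proof. by have := HT 1 x y; rewrite !scale1r. Qed.
Lemma L0 : T 0 = 0.
Proof. by have := HT 1 0 0; rewrite !scale1r addr0 => e; apply: (addrI (T 0)); rewrite addr0 -e. Qed.
Lemma LZ a x : T (a *: x) = a *: T x.
Proof. by have := HT a x 0; rewrite !addr0 L0 addr0. Qed.
Lemma LN x : T (- x) = - T x.
Proof. by rewrite -scaleN1r LZ scaleN1r. Qed.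
Lemma LB x y : T (x - y) = T x - T y.
Proof. by rewrite LD LN. Qed.
Lemma Lsum n (F : 'I_n -> V) : T (\sum_(i < n) F i) = \sum_(i < n) T (F i).
Proof. exact: (big_morph T LD L0). Qed.

Lemma eigen_exists : (exists v : V, v != 0) -> exists c (v : V), v != 0 /\ T v = c *: v.
Proof.
move=> [v0 nz].
set n := \dim (fullv : {vspace V}).
set e := vbasis (fullv : {vspace V}).
have fe : free e := basis_free (vbasisP fullv).
have expand : forall x : V, x = \sum_(i < n) coord e i x *: e`_i.
  by move=> x; apply: coord_vbasis; apply: memvf.
pose M : 'M[Cfield]_n := \matrix_(i, j) coord e j (T e`_i).
have n_gt0 : (0 < n)%N.
  rewrite lt0n; apply/negP => /eqP n0; move/negP: nz; apply.
  have : (fullv : {vspace V}) == 0%VS by rewrite -dimv_eq0 -/n n0.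
  by move/eqP => f0; have := memvf v0; rewrite f0 memv0.
have : exists c, root (char_poly M) c.
  by apply/closed_rootP; rewrite size_char_poly; case: (n) n_gt0.
case=> c; rewrite -eigenvalue_root_char => /eigenvalueP [r rM rnz].
exists c, (\sum_(i < n) r 0 i *: e`_i); split.
  apply: contra rnz => /eqP s0; apply/eqP/rowP => i; rewrite mxE.
  exact: (freeP fe (fun i => r 0 i) s0 i).
rewrite Lsum.
have -> : \sum_(i < n) T (r 0 i *: e`_i) = \sum_(i < n) \sum_(j < n) (r 0 i * M i j) *: e`_j.
  apply: eq_bigr => i _; rewrite LZ {1}(expand (T e`_i)) scaler_sumr.
  by apply: eq_bigr => j _; rewrite scalerA mxE.
rewrite exchange_big /= scaler_sumr; apply: eq_bigr => j _.
rewrite -scaler_suml scalerA; congr (_ *: _).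
have := congr1 (fun m : 'M[Cfield]_(1, n) => m 0 j) rM; rewrite !mxE => <-.
by apply: eq_bigr => i _.
Qed.
End Linear.

Section QC.
Variable T : V -> V.
Hypothesis HT : is_linear_map T.
Hypothesis HQ : forall x y, br (T x) y = br x (T y).

Lemma TD x y : T (x + y) = T x + T y.
Proof. by have := HT 1 x y; rewrite !scale1r. Qed.
Lemma T0 : T 0 = 0.
Proof. by have := HT 1 0 0; rewrite !scale1r addr0 => e; apply: (addrI (T 0)); rewrite addr0 -e. Qed.
Lemma TZ a x : T (a *: x) = a *: T x.
Proof. by have := HT a x 0; rewrite !addr0 T0 addr0. Qed.
Lemma TN x : T (- x) = - T x.
Proof. by rewrite -scaleN1r TZ scaleN1r. Qed.
Lemma TB x y : T (x - y) = T x - T y.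
Proof. by rewrite TD TN. Qed.

Lemma q1 x y : br (T y) x = - br (T x) y.
Proof. by rewrite HQ br_anti. Qed.

Lemma BD1 x u w : br (T (br x u)) w = br x (br (T u) w) + br (br (T x) w) u.
Proof.
rewrite HQ jac' -!HQ; congr (_ + _).
by rewrite br_anti opprK.
Qed.

Local Notation P p q r s := (br (br (T p) q) (br r s)).

Lemma identI x u y v :
  P u y x v - P u v x y - P x y u v + P x v u y = 0.
Proof.
set a := br (T u) y; set b := br (T x) y; set c := br (T u) v; set d := br (T x) v.
have eA : br (T (br x u)) (br y v) =
   br x (br a v) + br x (br y c) + br (br b v) u + br (br y d) u.
  by rewrite BD1 (jac (T u) y v) (jac (T x) y v) brDr brDl !addrA.
have eB : br (T (br x u)) (br y v) =
   br (br x a) v + br y (br x c) + br (br b u) v + br y (br d u).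
  rewrite (jac (T (br x u)) y v) (BD1 x u y) (BD1 x u v) brDl brDr !addrA.
  by rewrite (addrAC (br (br x a) v)).
have := sub4 _ _ _ _ _ _ _ _ (eq_trans (esym eA) eB).
have -> : br x (br a v) - br (br x a) v = br a (br x v) by rewrite (jac x a v) addrC addKr.
have -> : br x (br y c) - br y (br x c) = br (br x y) c by rewrite (jac x y c) addrK.
have -> : br (br b v) u - br (br b u) v = br b (br v u) by rewrite (jac b v u) (br_anti v (br b u)).
have -> : br (br y d) u - br y (br d u) = - br d (br y u).
  by rewrite (jac y d u) opprD addrA subrr add0r.
move=> <-.
rewrite (br_anti c) opprK (br_anti u v) brNr opprK (br_anti u y) brNr.
by [].
Qed.

Local Notation G p q r s := (P p q r s + P r s p q).

Lemma Gb x y u v : G u y x v = G x y u v.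
Proof.
exact: lin4 (identI x u y v).
Qed.

Lemma Ga p q r s : G q p r s = - G p q r s.
Proof.
by rewrite q1 brNl (br_anti q p) brNr opprD.
Qed.

Lemma PQ x y u v : P x y u v = - P u v x y.
Proof.
have e : G x y u v = - G x y u v.
  apply: (etrans (esym (Gb x y u v))).
  rewrite (Ga y u x v) (Gb x u y v) (Ga u x y v) (Gb y x u v) (Ga x y u v).
  by rewrite opprK.
by have := eq_opp0 _ e => /eqP; rewrite addr_eq0 => /eqP.
Qed.

Lemma WD a b c : br (T (br a b)) c = br (T a) (br b c) - br (T b) (br a c).
Proof.
apply/eqP; rewrite -subr_eq0; apply/eqP; apply: perfect => u v.
rewrite !brBl (PQ (br a b) c u v) (PQ a (br b c) u v) (PQ b (br a c) u v) (jac a b c) brDr.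
by rewrite opprK opprD opprK addrK addNr.
Qed.

Lemma centroid a b : T (br a b) = br (T a) b.
Proof.
apply/eqP; rewrite -subr_eq0; apply/eqP.
set E := T (br a b) - br (T a) b.
apply: centerless => c.
set E' := T (br a c) - br (T a) c.
have h1 : br E c = - br b E'.
  rewrite /E /E' brBl brBr WD (jac' (T a) b c) -HQ.
  by rewrite opprB addrC addrA subrK opprB.
have h2 : br E c = br b E'.
  rewrite /E /E' brBl brBr (HQ (br a b)) (jac' a b (T c)) -(HQ b) -(HQ a).
  rewrite (jac a (T b) c) -(HQ a b) -(HQ b (br a c)).
  by rewrite addrAC (addrC (br (br (T a) b) c)) addrK.
apply: eq_opp0; by rewrite {1}h1 h2.
Qed.

End QC.

Lemma V_nontriv : exists v : V, v != 0.
Proof.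
case: nonab => x [y nz]; exists x; apply: contra nz => /eqP ->; by rewrite br0l.
Qed.

Lemma qc_scalar T : is_linear_map T -> (forall x y, br (T x) y = br x (T y)) ->
  exists c, forall x, T x = c *: x.
Proof.
move=> HT HQ.
have [c [v [vnz Tv]]] := eigen_exists _ HT V_nontriv.
have P0 : T 0 = c *: 0 by rewrite (L0 _ HT) scaler0.
have Pl : forall a x y, T x = c *: x -> T y = c *: y -> T (a *: x + y) = c *: (a *: x + y).
  by move=> a x y Hx Hy; rewrite HT Hx Hy scalerDr !scalerA mulrC.
have Pi : forall x y, T y = c *: y -> T (br x y) = c *: br x y.
  move=> x y Hy; rewrite br_anti (LN _ HT) (centroid _ HQ) Hy brZl.
  by rewrite -scalerN -br_anti.
case: (@ideal_cases (fun k => T k = c *: k) P0 Pl Pi) => H.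
  by move/negP: vnz; case; apply/eqP; apply: H.
by exists c.
Qed.


Section Split.
Variable a : V -> V.
Hypothesis Ha : is_linear_map a.
Hypothesis Haa : forall x y, br (a x) y = - br x (a y).
Variable d : Cfield.
Hypothesis Hd : forall x, a (a x) = d *: x.
Hypothesis d0 : d != 0.

Let mu := sqrtC d.
Lemma mu2 : mu * mu = d.
Proof. by rewrite -expr2 sqrtCK. Qed.
Lemma mu0 : mu != 0.
Proof. by apply: contra d0 => /eqP m0; rewrite -mu2 m0 mul0r. Qed.
Let k := (2 * mu)^-1.
Lemma k2mu : k * (2 * mu) = 1.
Proof. by rewrite mulVf // mulf_neq0 ?two_neq0 ?mu0. Qed.

Definition pl x := k *: (a x + mu *: x).
Definition mi x := k *: (mu *: x - a x).

Lemma dec x : x = pl x + mi x.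
Proof.
rewrite /pl /mi -scalerDr addrC -addrA addKr -scalerDl -mulr2n -mulr_natl.
by rewrite scalerA -[2%:R]/(2 : Cfield) k2mu scale1r.
Qed.

Lemma a_pl x : a (pl x) = mu *: pl x.
Proof.
rewrite /pl (LZ _ Ha) (LD _ Ha) Hd (LZ _ Ha) -mu2.
by rewrite -scalerA -scalerDr !scalerA mulrC addrC.
Qed.

Lemma a_mi x : a (mi x) = - mu *: mi x.
Proof.
rewrite /mi (LZ _ Ha) (LB _ Ha) Hd (LZ _ Ha) -mu2.
rewrite -scalerA -scalerBr scalerA mulrC -scalerA [in RHS]scaleNr -[in RHS]scalerN.
by rewrite -[in RHS]scalerN opprB.
Qed.

Lemma abel l p q : l != 0 -> a p = l *: p -> a q = l *: q -> br p q = 0.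
Proof.
move=> l0 hp hq; have e := Haa p q; rewrite hp hq brZl brZr in e.
have := eq_opp0 _ e => /eqP; rewrite scaler_eq0 (negPf l0) /= => /eqP.
done.
Qed.

Lemma metab p p' q q' : a p = mu *: p -> a p' = mu *: p' ->
  a q = - mu *: q -> a q' = - mu *: q' -> br (br p' q') (br p q) = 0.
Proof.
move=> hp hp' hq hq'.
have m0 : - mu != 0 by rewrite oppr_eq0 mu0.
set w := br p' q; set w2 := br p q'.
have Apq' := abel _ _ _ mu0 hp' hp.
have Bqq' := abel _ _ _ m0 hq' hq.
have e1 : br q' (br p q) = br q w2.
  rewrite (jac q' p q) Bqq' br0r addr0 br_anti (br_anti q' p) brNr opprK.
  done.
have e2 : br p' (br p q) = br p w.
  by rewrite (jac p' p q) Apq' br0l add0r.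
have e3 : br q' (br p w) = br (mi w) w2.
  rewrite {1}(dec w) brDr (abel _ _ _ mu0 hp (a_pl w)) add0r.
  rewrite (jac q' p (mi w)) (abel _ _ _ m0 hq' (a_mi w)) br0r addr0.
  by rewrite br_anti (br_anti q' p) brNr opprK.
have e4 : br p' (br q w2) = br (mi w) (pl w2).
  rewrite {1}(dec w2) brDr (abel _ _ _ m0 hq (a_mi w2)) addr0.
  rewrite (jac p' q (pl w2)) (abel _ _ _ mu0 hp' (a_pl w2)) br0r addr0.
  by rewrite -/w {1}(dec w) brDl (abel _ _ _ mu0 (a_pl w) (a_pl w2)) add0r.
rewrite jac' e1 e2 e4 e3 {2}(dec w2) brDr (abel _ _ _ m0 (a_mi w) (a_mi w2)) addr0.
by rewrite subrr.
Qed.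

Lemma split_false : False.
Proof.
have m0 : - mu != 0 by rewrite oppr_eq0 mu0.
have bxy : forall x y, br x y = br (pl x) (mi y) - br (pl y) (mi x).
  move=> x y; rewrite {1}(dec x) {1}(dec y) !brDl !brDr.
  rewrite (abel _ _ _ mu0 (a_pl x) (a_pl y)) (abel _ _ _ m0 (a_mi x) (a_mi y)) add0r addr0.
  by rewrite (br_anti (mi x)).
have all0 : forall x y z w, br (br x y) (br z w) = 0.
  move=> x y z w; rewrite (bxy x y) (bxy z w) !brBl !brBr.
  rewrite !metab ?a_pl ?a_mi //.
  by rewrite !subrr.
case: nonab => x [y]; rewrite (@perfect (br x y)) ?eqxx //.
Qed.

End Split.


Definition anti (a : V -> V) :=
  @is_linear_map _ V a /\ forall x y, br (a x) y = - br x (a y).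

Lemma lin_comp (f g : V -> V) : is_linear_map f -> is_linear_map g -> is_linear_map (fun x => f (g x)).
Proof. by move=> hf hg c x y; rewrite hg hf. Qed.
Lemma lin_add (f g : V -> V) : is_linear_map f -> is_linear_map g -> is_linear_map (fun x => f x + g x).
Proof.
move=> hf hg c x y; rewrite hf hg scalerDr -!addrA; congr (_ + _).
by rewrite addrCA.
Qed.
Lemma lin_sub (f g : V -> V) : is_linear_map f -> is_linear_map g -> is_linear_map (fun x => f x - g x).
Proof.
move=> hf hg c x y; rewrite hf hg scalerBr opprD -!addrA; congr (_ + _).
by rewrite addrCA.
Qed.
Lemma lin_br k : is_linear_map (br k).
Proof. by move=> c x y; rewrite brR. Qed.

Lemma anti_sq0 a : anti a -> forall x, a (a x) = 0.
Proof.
case=> Ha Haa.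
have hl : is_linear_map (fun x => a (a x)) by apply: lin_comp.
have hq : forall x y, br (a (a x)) y = br x (a (a y)).
  by move=> x y; rewrite Haa Haa opprK.
have [c Hc] := qc_scalar _ hl hq.
case: (eqVneq c 0) => [c0|c0] x.
  by rewrite Hc c0 scale0r.
by case: (split_false _ Ha Haa _ Hc c0).
Qed.

Lemma anti_add a b : anti a -> anti b -> anti (fun x => a x + b x).
Proof.
case=> Ha Haa [Hb Hbb]; split; first by apply: lin_add.
by move=> x y; rewrite brDl brDr Haa Hbb opprD.
Qed.

Lemma anti_comm a b : anti a -> anti b -> forall x, a (b x) = - b (a x).
Proof.
move=> ha hb x; have := anti_sq0 _ (anti_add _ _ ha hb) x => /=.
have [Ha _] := ha; have [Hb _] := hb.
rewrite (LD _ Ha) (LD _ Hb) (anti_sq0 _ ha x) (anti_sq0 _ hb x) add0r addr0.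
by move/eqP; rewrite addr_eq0 => /eqP.
Qed.

Lemma anti_mul a b : anti a -> anti b -> anti (fun x => a (b x)).
Proof.
move=> ha hb; have [Ha Haa] := ha; have [Hb Hbb] := hb.
split; first by apply: lin_comp.
by move=> x y; rewrite Haa Hbb opprK (anti_comm _ _ hb ha) brNr.
Qed.

Lemma anti_d a k : anti a -> anti (fun x => a (br k x) - br k (a x)).
Proof.
case=> Ha Haa; split.
  by apply: lin_sub; [apply: lin_comp => //; apply: lin_br | apply: lin_comp => //; apply: lin_br].
move=> x y.
have e1 : br x (a y) = - br (a x) y by rewrite Haa opprK.
have e2 : br x (a (br k y)) = - br (a x) (br k y) by rewrite Haa opprK.
rewrite brBl brBr Haa (jac' k x (a y)) (jac' k (a x) y) e1 e2 brNr.
by rewrite !opprB !opprK addrACA subrr addr0.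
Qed.


Lemma img_ex (f : V -> V) : @is_linear_map _ V f ->
  exists U : {vspace V}, forall y, y \in U <-> exists z, y = f z.
Proof.
move=> hf; apply: vspace_of_pred.
  by exists 0; rewrite (L0 _ hf).
by move=> c x y [z1 ->] [z2 ->]; exists (c *: z1 + z2); rewrite hf.
Qed.

Definition Good m := exists a, anti a /\ (exists x, a x != 0) /\
  exists U : {vspace V}, (forall y, y \in U <-> exists z, y = a z) /\ \dim U = m.

Lemma good_min m : Good m -> exists m0, Good m0 /\ forall m', Good m' -> (m0 <= m')%N.
Proof.
elim/ltn_ind: m => m IH gm.
case: (classic (exists m', Good m' /\ (m' < m)%N)) => [[m' [g lt]]|nex].
  exact: IH m' lt g.
exists m; split=> // m' g'; rewrite leqNgt; apply/negP => lt; apply: nex.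
by exists m'.
Qed.

Lemma anti_zero a : anti a -> forall x, a x = 0.
Proof.
move=> ha x; apply: NNPP => nz.
have [U HU] := img_ex _ ha.1.
have g : Good (\dim U).
  by exists a; split=> //; split; [exists x; apply/eqP | exists U].
have [r [[P [hP [[x1 nx1] [UP [HUP dUP]]]]] minr]] := good_min _ g.
have kill : forall b, anti b -> forall z, b (P z) = 0.
  move=> b hb z; apply: NNPP => nbz.
  have hQ := anti_mul _ _ hb hP.
  have [W HW] := img_ex _ hQ.1.
  have gW : Good (\dim W).
    by exists (fun x => b (P x)); split=> //; split; [exists z; apply/eqP | exists W].
  have le := minr _ gW.
  have sub : (W <= UP)%VS.
    apply/subvP => y /HW [z' ->]; apply/HUP; exists (- b z').
    by rewrite (LN _ hP.1) (anti_comm _ _ hb hP).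
  have eW : W = UP by apply/eqP; rewrite eqEdim sub dUP.
  have : P z \in W by rewrite eW; apply/HUP; exists z.
  move/HW => [w ew]; apply: nbz; rewrite ew.
  exact: anti_sq0.
have P0 : forall b, anti b -> b 0 = 0 by move=> b hb; rewrite (L0 _ hb.1).
have Pl : forall c x y, (forall b, anti b -> b x = 0) -> (forall b, anti b -> b y = 0) ->
    forall b, anti b -> b (c *: x + y) = 0.
  by move=> c x' y Hx Hy b hb; rewrite hb.1 Hx // Hy // scaler0 addr0.
have Pi : forall x y, (forall b, anti b -> b y = 0) -> forall b, anti b -> b (br x y) = 0.
  move=> x' k Hk b hb; have := Hk _ (anti_d _ x' hb) => /= /eqP.
  by rewrite subr_eq0 => /eqP ->; rewrite Hk // br0r.
case: (@ideal_cases (fun k => forall b, anti b -> b k = 0) P0 Pl Pi) => H.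
  by move/negP: nx1; apply; apply/eqP; apply: H => b hb; apply: kill.
by move/negP: nx1; apply; apply/eqP; apply: H.
Qed.

End Lie.

Theorem lemma2p2 (V : vectType Cfield) (br : V -> V -> V)
  (Hlie : is_lie_bracket br) (Hsimple : simple_lie br)
  (eta : {vspace V}) (Heta : cartan_subalgebra br eta)
  (f : V -> V -> V) (Hf : biderivation br f)
  (phi psi : V -> V) (Hphi : is_linear_map phi) (Hpsi : is_linear_map psi)
  (Hfphi : forall x y, f x y = br (phi x) y)
  (Hfpsi : forall x y, f x y = br x (psi y)) :
  forall h, h \in eta -> phi h \in eta /\ psi h \in eta.
Proof.
have rel : forall x y, br (phi x) y = br x (psi y) by move=> x y; rewrite -Hfphi Hfpsi.
have rel2 : forall x y, br (psi x) y = br x (phi y).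
  by move=> x y; rewrite (br_anti _ _ Hlie) -rel (br_anti _ _ Hlie (phi y)) opprK.
have lsig : @is_linear_map _ V (fun x => phi x + psi x) by apply: lin_add.
have qsig : forall x y, br (phi x + psi x) y = br x (phi y + psi y).
  by move=> x y; rewrite (brDl _ _ Hlie) (brDr _ _ Hlie) rel rel2 addrC.
have [s Hs] := qc_scalar _ _ Hlie Hsimple _ lsig qsig.
set c := s / 2.
have cc : c + c = s.
  by rewrite /c -mulrDr -div1r -mulrDl -[1 + 1]/(2%:R) divff ?two_neq0 ?mulr1.
have hn : @anti V br (fun x => phi x - c *: x).
  split.
    apply: lin_sub => //; by move=> a x y; rewrite scalerDr !scalerA mulrC.
  move=> x y /=.
  have e : br (phi x) y = s *: br x y - br x (phi y).
    by rewrite -(brZl _ _ Hlie) -Hs (brDl _ _ Hlie) rel2 addrK.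
  rewrite (brBl _ _ Hlie) (brBr _ _ Hlie) (brZl _ _ Hlie) (brZr _ _ Hlie) e -cc scalerDl.
  by rewrite opprB addrAC addrK addrC.
have hphi : forall x, phi x = c *: x.
  by move=> x; apply/eqP; rewrite -subr_eq0; apply/eqP; apply: (anti_zero _ _ Hlie Hsimple _ hn).
have hpsi : forall x, psi x = c *: x.
  by move=> x; have := Hs x; rewrite hphi -cc scalerDl; apply: addrI.
by move=> h hh; rewrite hphi hpsi !memvZ.
Qed.
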